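(* Let ${\cal H}$ be a finite-dimensional complex Hilbert space, let $Z$ be a positive definite operator on ${\cal H}$ with largest eigenvalue $a$ and smallest eigenvalue $b$, and let $1\le p\le 2$. Then for every subspace ${\cal E}\subset{\cal H}$, $$(Z_{\cal E})^p \ge \frac{4ab}{(a+b)^2}\,(Z^p)_{\cal E}.$$
   Context: For an operator $X$ on ${\cal H}$ and a subspace ${\cal E}$ with orthogonal projection $E$, the compression $X_{\cal E}$ is the operator $EXE$ restricted to ${\cal E}$, regarded as an operator on ${\cal E}$. The order $\ge$ is the Loewner order on Hermitian operators on ${\cal E}$. *)

(* Defs.v *)
From HB Require Import structures.
From mathcomp Require Import all_boot all_order all_algebra.
From mathcomp Require Import complex.
From mathcomp Require Import boolp reals exp.
Set Implicit Arguments. Unset Strict Implicit. Unset Printing Implicit Defensive.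
Import Order.TTheory GRing.Theory Num.Theory.
Local Open Scope ring_scope.

Section Defs.
Variable R : realType.
Local Notation C := R[i].

Definition rC (x : R) : C := Complex x 0.

Definition adj {m n} (A : 'M[C]_(m, n)) : 'M[C]_(n, m) := map_mx Num.conj A^T.

Definition hermitian {n} (A : 'M[C]_n) : Prop := adj A = A.

Definition psd {n} (A : 'M[C]_n) : Prop :=
  hermitian A /\ forall x : 'cV[C]_n, 0 <= (adj x *m A *m x) 0 0.

Definition posdef {n} (A : 'M[C]_n) : Prop :=
  hermitian A /\ forall x : 'cV[C]_n, x != 0 -> 0 < (adj x *m A *m x) 0 0.

Definition loewner_ge {n} (A B : 'M[C]_n) : Prop := psd (A - B).

Definition unitary {n} (U : 'M[C]_n) : Prop := U *m adj U = 1%:M.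

(* isometry V : C^k -> C^n, i.e. its columns are an orthonormal basis of a
   k-dimensional subspace E of C^n *)
Definition is_isometry {n k} (V : 'M[C]_(n, k)) : Prop := adj V *m V = 1%:M.

(* compression of X to the range E of the isometry V, regarded as an operator
   on E (written in the orthonormal basis given by the columns of V) *)
Definition compression {n k} (V : 'M[C]_(n, k)) (X : 'M[C]_n) : 'M[C]_k :=
  adj V *m X *m V.

Definition spec_decomp {n} (A : 'M[C]_n) (Ud : 'M[C]_n * 'rV[R]_n) : Prop :=
  [/\ unitary Ud.1, forall i, 0 <= Ud.2 0 i &
      A = Ud.1 *m diag_mx (\row_i rC (Ud.2 0 i)) *m adj Ud.1].

(* real power A^p of a positive semidefinite matrix, via functional calculus on
   a (chosen) spectral decomposition; 0 if A has no such decomposition *)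
Definition mxpowR {n} (A : 'M[C]_n) (p : R) : 'M[C]_n :=
  match pselect (exists Ud, spec_decomp A Ud) with
  | left h => let Ud := projT1 (cid h) in
      Ud.1 *m diag_mx (\row_i rC (powR (Ud.2 0 i) p)) *m adj Ud.1
  | right _ => 0
  end.

End Defs.

(* Main.v *)
Require Import Defs.
From HB Require Import structures.
From mathcomp Require Import all_boot all_order all_algebra.
From mathcomp Require Import complex.
From mathcomp Require Import boolp reals exp.
From mathcomp Require interval_inference classical_sets convex hoelder.
From mathcomp Require Import ring lra.
Import Order.TTheory GRing.Theory Num.Theory.
Local Open Scope ring_scope.
Set Implicit Arguments. Unset Strict Implicit.

Lemma conv_pow (R : realType) (p t x y : R) : 1 <= p -> 0 <= t -> t <= 1 ->
  0 <= x -> 0 <= y ->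
  (t * x + (1 - t) * y) `^ p <= t * x `^ p + (1 - t) * y `^ p.
Proof.
move=> p1 t0 t1 x0 y0.
have := @hoelder.convex_powR R p p1 (interval_inference.Itv01 t0 t1) x y.
rewrite !classical_sets.inE /= !in_itv /= x0 y0 => /(_ isT isT).
by rewrite !convex.convRE /=.
Qed.

Lemma conc_pow (R : realType) (r t x y : R) : 0 < r -> r <= 1 -> 0 <= t -> t <= 1 ->
  0 <= x -> 0 <= y ->
  t * x `^ r + (1 - t) * y `^ r <= (t * x + (1 - t) * y) `^ r.
Proof.
move=> r0 r1 t0 t1 x0 y0.
have q1 : 1 <= r^-1 by rewrite invf_ge1.
have K z : 0 <= z -> (z `^ r) `^ r^-1 = z.
  by move=> z0; rewrite -powRrM mulfV ?gt_eqF // powRr1.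
have K' z : 0 <= z -> (z `^ r^-1) `^ r = z.
  by move=> z0; rewrite -powRrM mulVf ?gt_eqF // powRr1.
have h := conv_pow q1 t0 t1 (powR_ge0 x r) (powR_ge0 y r).
rewrite !K // in h.
have w0 : 0 <= t * x `^ r + (1 - t) * y `^ r.
  by rewrite addr_ge0 // mulr_ge0 ?powR_ge0 // subr_ge0.
rewrite -[X in X <= _]K' //.
apply: ge0_ler_powR; rewrite ?nnegrE ?(ltW r0) ?powR_ge0 //.
by rewrite addr_ge0 // mulr_ge0 // subr_ge0.
Qed.

Definition lam (R : realType) (a b p : R) := (a `^ p - b `^ p) / (a - b).
Definition Lf (R : realType) (a b p s : R) := lam a b p * s + (b `^ p - lam a b p * b).

Lemma Lf_conv (R : realType) (a b p s : R) : b < a ->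
  Lf a b p s = (s - b) / (a - b) * a `^ p + (1 - (s - b) / (a - b)) * b `^ p.
Proof.
move=> ba; have hab : a - b != 0 by rewrite subr_eq0 gt_eqF.
rewrite /Lf /lam; field; exact: hab.
Qed.

Lemma S1 (R : realType) (a b p s : R) : 0 <= b -> b <= s -> s <= a -> 1 <= p ->
  s `^ p <= Lf a b p s.
Proof.
move=> b0 bs sa p1.
have [ab|ba] := leP a b.
  have sb : s = b by apply/le_anti; rewrite bs (le_trans sa ab).
  have eab : a = b by apply/le_anti; rewrite ab (le_trans bs sa).
  by rewrite /Lf sb eab; lra.
have hab : 0 < a - b by rewrite subr_gt0.
rewrite Lf_conv //.
have t0 : 0 <= (s - b) / (a - b) by rewrite divr_ge0 // ?subr_ge0 // ltW.
have t1 : (s - b) / (a - b) <= 1 by rewrite ler_pdivrMr // mul1r lerB.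
rewrite {1}(_ : s = (s - b) / (a - b) * a + (1 - (s - b) / (a - b)) * b); last first.
  by field; rewrite gt_eqF.
apply: conv_pow => //; exact: (le_trans b0 (ltW ba)).
Qed.

Lemma S2 (R : realType) (a b p s : R) : 0 < b -> b <= s -> s <= a -> 1 <= p -> p <= 2 ->
  4 * a * b / (a + b) ^+ 2 * Lf a b p s <= s `^ p.
Proof.
move=> b0 bs sa p1 p2.
have a0 : 0 < a by lra.
have s0 : 0 < s by lra.
have [ab|ba] := leP a b.
  have sb : s = b by apply/le_anti; rewrite bs (le_trans sa ab).
  have eab : a = b by apply/le_anti; rewrite ab (le_trans bs sa).
  rewrite /Lf sb eab /lam !subrr invr0 !mulr0 mul0r add0r subr0.
  have -> : 4 * b * b / (b + b) ^+ 2 = 1 by field; lra.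
  by rewrite mul1r.
have hab : 0 < a - b by rewrite subr_gt0.
rewrite Lf_conv //.
set t := (s - b) / (a - b).
have t0 : 0 <= t by rewrite divr_ge0 // ?subr_ge0 // ltW.
have t1 : t <= 1 by rewrite ler_pdivrMr // mul1r lerB.
set r := p / 2.
have r0 : 0 < r by rewrite /r; lra.
have r1 : r <= 1 by rewrite /r; lra.
have hsq z : 0 <= z -> z `^ p = (z ^+ 2) `^ r.
  by move=> z0; rewrite -powR_mulrn // -powRrM; congr (_ `^ _); rewrite /r; field.
rewrite (hsq a) ?(ltW a0) // (hsq b) ?(ltW b0) // (hsq s) ?(ltW s0) //.
have h1 := conc_pow r0 r1 t0 t1 (sqr_ge0 a) (sqr_ge0 b).
set K := (a + b) ^+ 2 / (4 * a * b).
have K1 : 1 <= K.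
  rewrite /K ler_pdivlMr; last by rewrite !mulr_gt0.
  rewrite mul1r; nra.
have h2 : t * a ^+ 2 + (1 - t) * b ^+ 2 <= K * s ^+ 2.
  have -> : t * a ^+ 2 + (1 - t) * b ^+ 2 = (a + b) * s - a * b.
    by rewrite /t; field; rewrite gt_eqF.
  rewrite -subr_ge0.
  have -> : K * s ^+ 2 - ((a + b) * s - a * b) = ((a + b) * s - 2 * a * b) ^+ 2 / (4 * a * b).
    by rewrite /K; field; lra.
  by rewrite divr_ge0 ?sqr_ge0 // ltW // !mulr_gt0.
have c0 : 0 <= 4 * a * b / (a + b) ^+ 2 by rewrite divr_ge0 ?sqr_ge0 // ltW // !mulr_gt0.
have cK : 4 * a * b / (a + b) ^+ 2 * K = 1.
  by rewrite /K; field; rewrite ?mulf_neq0 ?gt_eqF ?sqrf_eq0 ?gt_eqF //; lra.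
apply: (le_trans (ler_wpM2l c0 h1)).
have h3 : (t * a ^+ 2 + (1 - t) * b ^+ 2) `^ r <= (K * s ^+ 2) `^ r.
  apply: ge0_ler_powR => //; rewrite ?nnegrE ?(ltW r0) //.
    by rewrite addr_ge0 // mulr_ge0 ?sqr_ge0 // subr_ge0.
  by rewrite mulr_ge0 ?sqr_ge0 // (le_trans ler01).
apply: (le_trans (ler_wpM2l c0 h3)).
rewrite powRM ?sqr_ge0 ?(le_trans ler01) //.
apply: (@le_trans _ _ (4 * a * b / (a + b) ^+ 2 * (K * (s ^+ 2) `^ r))).
  apply: ler_wpM2l => //; apply: ler_wpM2r; [exact: powR_ge0 | exact: ler1_powR].
by rewrite mulrA cK mul1r.
Qed.

Lemma sum_ineq (R : realType) (n k : nat) (a b p : R) (d z : 'I_n -> R) (e u : 'I_k -> R) :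
  (forall i, b <= d i <= a) -> (forall j, b <= e j <= a) ->
  (forall i, 0 <= d i) -> (forall i, 0 <= z i) -> (forall j, 0 <= u j) ->
  \sum_i z i = \sum_j u j -> \sum_i d i * z i = \sum_j e j * u j ->
  1 <= p -> p <= 2 ->
  4 * a * b / (a + b) ^+ 2 * \sum_i d i `^ p * z i <= \sum_j e j `^ p * u j.
Proof.
move=> hd he d0 z0 u0 hz hdz p1 p2.
have R0 : 0 <= \sum_j e j `^ p * u j by apply: sumr_ge0 => j _; rewrite mulr_ge0 ?powR_ge0.
have L0 : 0 <= \sum_i d i `^ p * z i by apply: sumr_ge0 => i _; rewrite mulr_ge0 ?powR_ge0.
set c := 4 * a * b / (a + b) ^+ 2.
have [c0|c0] := leP c 0.
  by apply: le_trans R0; rewrite mulr_le0_ge0.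
have ab0 : 0 < a * b.
  move: c0; rewrite /c; have [->|hn] := eqVneq ((a + b) ^+ 2) 0.
    by rewrite invr0 mulr0 ltxx.
  move=> h; have hp : 0 < (a + b) ^+ 2 by rewrite lt_neqAle eq_sym hn sqr_ge0.
  have : 0 < 4 * a * b by move: h; rewrite pmulr_lgt0 // invr_gt0.
  lra.
have [b0|b0] := leP b 0.
  rewrite big1 ?mulr0 // => i _; exfalso.
  have /andP[h1 h2] := hd i; have := d0 i.
  have : a < 0 by nra.
  lra.
have cg0 : 0 <= c := ltW c0.
apply: (@le_trans _ _ (c * \sum_i Lf a b p (d i) * z i)).
  apply: ler_wpM2l => //; apply: ler_sum => i _; apply: ler_wpM2r => //.
  by have /andP[h1 h2] := hd i; apply: S1 => //; exact: ltW.
have -> : \sum_i Lf a b p (d i) * z i = \sum_j Lf a b p (e j) * u j.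
  rewrite /Lf.
  under eq_bigr do rewrite mulrDl -mulrA.
  under [in RHS]eq_bigr do rewrite mulrDl -mulrA.
  by rewrite !big_split /= -!mulr_sumr hz hdz.
rewrite mulr_sumr; apply: ler_sum => j _.
rewrite mulrA; apply: ler_wpM2r => //.
by have /andP[h1 h2] := he j; apply: S2.
Qed.

Lemma adjM (R : realType) m n p (A : 'M[R[i]]_(m, n)) (B : 'M[R[i]]_(n, p)) :
  adj (A *m B) = adj B *m adj A.
Proof. by rewrite /adj trmx_mul map_mxM. Qed.

Lemma adjK (R : realType) m n (A : 'M[R[i]]_(m, n)) : adj (adj A) = A.
Proof. by apply/matrixP => i j; rewrite !mxE conjCK. Qed.

Lemma adjB (R : realType) m n (A B : 'M[R[i]]_(m, n)) : adj (A - B) = adj A - adj B.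
Proof. by apply/matrixP => i j; rewrite !mxE rmorphB. Qed.

Lemma adjZ (R : realType) m n (c : R[i]) (A : 'M[R[i]]_(m, n)) :
  adj (c *: A) = Num.conj c *: adj A.
Proof. by apply/matrixP => i j; rewrite !mxE rmorphM. Qed.

Lemma adj1 (R : realType) n : adj (1%:M : 'M[R[i]]_n) = 1%:M.
Proof. apply/matrixP => i j; rewrite !mxE eq_sym; exact: rmorph_nat. Qed.

Lemma adj0 (R : realType) m n : adj (0 : 'M[R[i]]_(m, n)) = 0.
Proof. by apply/matrixP => i j; rewrite !mxE conjC0. Qed.

Lemma conj_rC (R : realType) (x : R) : Num.conj (rC x) = rC x.
Proof. exact: (conjc_real x). Qed.

Lemma adj_diag (R : realType) n (f : 'I_n -> R) :
  adj (diag_mx (\row_i rC (f i))) = diag_mx (\row_i rC (f i)).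
Proof.
apply/matrixP => i j; rewrite !mxE eq_sym.
have [<-|ne] := eqVneq i j; rewrite ?mulr1n ?mulr0n; [exact: conj_rC | exact: conjC0].
Qed.

Definition nsq (R : realType) (z : R[i]) : R := complex.Re z ^+ 2 + complex.Im z ^+ 2.

Lemma nsq_ge0 (R : realType) (z : R[i]) : 0 <= nsq z.
Proof. by rewrite /nsq addr_ge0 ?sqr_ge0. Qed.

Lemma conj_mul (R : realType) (z : R[i]) : Num.conj z * z = rC (nsq z).
Proof. change (conjc z * z = rC (nsq z)); case: z => x y; rewrite /nsq /rC /=; simpc. by rewrite !expr2 [y * x]mulrC subrr. Qed.

Lemma rCM (R : realType) (x y : R) : rC (x * y) = rC x * rC y.
Proof. exact: (rmorphM (real_complex R)). Qed.

Lemma rCD (R : realType) (x y : R) : rC (x + y) = rC x + rC y.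
Proof. exact: (rmorphD (real_complex R)). Qed.

Lemma rCB (R : realType) (x y : R) : rC (x - y) = rC x - rC y.
Proof. exact: (rmorphB (real_complex R)). Qed.

Lemma rC1 (R : realType) : rC (1 : R) = 1.
Proof. by []. Qed.

Lemma rC0 (R : realType) : rC (0 : R) = 0.
Proof. by []. Qed.

Lemma rC_sum (R : realType) m (F : 'I_m -> R) : rC (\sum_i F i) = \sum_i rC (F i).
Proof. exact: (rmorph_sum (real_complex R)). Qed.

Lemma rC_le (R : realType) (x y : R) : (rC x <= rC y) = (x <= y).
Proof. exact: lecR. Qed.

Lemma qform (R : realType) n m (U : 'M[R[i]]_(n, m)) (f : 'I_m -> R) (x : 'cV[R[i]]_n) :
  (adj x *m (U *m diag_mx (\row_i rC (f i)) *m adj U) *m x) 0 0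
  = rC (\sum_i f i * nsq ((adj U *m x) i 0)).
Proof.
set w := adj U *m x.
have -> : adj x *m (U *m diag_mx (\row_i rC (f i)) *m adj U) *m x
          = adj w *m diag_mx (\row_i rC (f i)) *m w by rewrite /w adjM adjK !mulmxA.
rewrite mxE rC_sum; apply: eq_bigr => j _.
rewrite mul_mx_diag !mxE rCM -conj_mul; ring.
Qed.

Lemma rC_ge0 (R : realType) (x : R) : (0 <= rC x) = (0 <= x).
Proof. exact: (lecR 0 x). Qed.

Lemma rC_inj (R : realType) (x y : R) : rC x = rC y -> x = y.
Proof. by case. Qed.

Lemma unitaryC (R : realType) n (U : 'M[R[i]]_n) : U *m adj U = 1%:M -> adj U *m U = 1%:M.
Proof. exact: mulmx1C. Qed.

Lemma qcomp (R : realType) n k (V : 'M[R[i]]_(n, k)) (A : 'M[R[i]]_n) (x : 'cV[R[i]]_k) :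
  adj x *m (adj V *m A *m V) *m x = adj (V *m x) *m A *m (V *m x).
Proof. by rewrite adjM !mulmxA. Qed.

Lemma diag1 (R : realType) n : diag_mx (\row_(i < n) rC (1 : R)) = 1%:M.
Proof. by rewrite -diag_const_mx; congr diag_mx; apply/matrixP => i j; rewrite !mxE. Qed.

Lemma qform1 (R : realType) n m (U : 'M[R[i]]_(n, m)) (x : 'cV[R[i]]_n) :
  U *m adj U = 1%:M ->
  (adj x *m x) 0 0 = rC (\sum_i nsq ((adj U *m x) i 0)).
Proof.
move=> hU.
have := qform U (fun _ => 1) x.
rewrite diag1 mulmx1 hU mulmx1 => ->.
by under eq_bigr do rewrite mul1r.
Qed.

Lemma qform_pick (R : realType) n (U : 'M[R[i]]_n) (f : 'I_n -> R) (i : 'I_n) :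
  adj U *m U = 1%:M ->
  (adj (U *m (delta_mx i 0 : 'cV_n)) *m (U *m diag_mx (\row_j rC (f j)) *m adj U)
     *m (U *m (delta_mx i 0 : 'cV_n))) 0 0
  = rC (f i).
Proof.
move=> hU; rewrite qform mulmxA hU mul1mx.
rewrite (bigD1 i) //= big1 ?addr0.
  by rewrite mxE eqxx /nsq /= expr0n /= addr0 expr1n mulr1.
move=> j ji; rewrite mxE (negbTE ji) /nsq /= expr0n /= addr0 mulr0 //.
Qed.

Lemma hermitian_decomp (R : realType) n (U : 'M[R[i]]_n) (f : 'I_n -> R) :
  adj (U *m diag_mx (\row_i rC (f i)) *m adj U) = U *m diag_mx (\row_i rC (f i)) *m adj U.
Proof. by rewrite !adjM adjK adj_diag mulmxA. Qed.

Lemma psd_decomp (R : realType) n (U : 'M[R[i]]_n) (f : 'I_n -> R) :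
  (forall i, 0 <= f i) -> psd (U *m diag_mx (\row_i rC (f i)) *m adj U).
Proof.
move=> f0; split; first exact: hermitian_decomp.
move=> x; rewrite qform rC_ge0; apply: sumr_ge0 => i _.
by rewrite mulr_ge0 ?nsq_ge0.
Qed.

Lemma decomp_eigen (R : realType) n (Z : 'M[R[i]]_n) (U : 'M[R[i]]_n) (d : 'rV[R]_n) (i : 'I_n) :
  U *m adj U = 1%:M -> Z = U *m diag_mx (\row_j rC (d 0 j)) *m adj U ->
  eigenvalue Z (rC (d 0 i)).
Proof.
move=> hU hZ; have hU' := unitaryC hU.
apply/eigenvalueP; exists (row i (adj U)).
  rewrite -row_mul hZ !mulmxA hU' mul1mx mul_diag_mx.
  by apply/rowP => j; rewrite !mxE.
apply/eqP => h0.
have : row i (adj U *m U) = 0 by rewrite row_mul h0 mul0mx.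
rewrite hU' row1 => /rowP /(_ i); rewrite !mxE !eqxx /=.
by move/eqP; rewrite oner_eq0.
Qed.

Lemma spec_exists (R : realType) n (M : 'M[R[i]]_n) :
  Defs.hermitian M -> (forall x : 'cV[R[i]]_n, 0 <= (adj x *m M *m x) 0 0) -> exists Ud, spec_decomp M Ud.
Proof.
move=> hM hpos.
have hreal : spectral_diag M \is a realmx.
  apply: hermitian_spectral_diag_real.
  by rewrite is_hermitianmxE expr0 scale1r; apply/eqP; rewrite -[LHS]hM.
have /orthomx_spectralP hsp : M \is normalmx.
  apply: hermitian_normalmx.
  by rewrite is_hermitianmxE expr0 scale1r; apply/eqP; rewrite -[LHS]hM.
set P := spectralmx M in hsp.
set sp := spectral_diag M in hsp hreal.
have hP : P \is unitarymx := spectral_unitarymx M.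
rewrite invmx_unitary // in hsp.
have hP1 : P *m adj P = 1%:M by apply/unitarymxP.
set d : 'rV[R]_n := \row_j complex.Re (sp 0 j).
have hd : diag_mx sp = diag_mx (\row_j rC (d 0 j)).
  congr diag_mx; apply/rowP => j; rewrite !mxE.
  have : sp 0 j \is Num.real by apply: (mxOverP hreal).
  by move/RRe_real.
have hW : adj P *m adj (adj P) = 1%:M by rewrite adjK; exact: unitaryC.
have hM' : M = adj P *m diag_mx (\row_j rC (d 0 j)) *m adj (adj P).
  by rewrite adjK -hd.
exists (adj P, d); split => //= j.
have := hpos (adj P *m (delta_mx j 0 : 'cV_n)).
by rewrite hM' qform_pick ?rC_ge0 // unitaryC.
Qed.

Lemma mxpowR_spec (R : realType) n (A : 'M[R[i]]_n) (p : R) :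
  (exists Ud, spec_decomp A Ud /\
     mxpowR A p = Ud.1 *m diag_mx (\row_i rC (powR (Ud.2 0 i) p)) *m adj Ud.1)
  \/ ((~ exists Ud, spec_decomp A Ud) /\ mxpowR A p = 0).
Proof.
rewrite /mxpowR; case: pselect => h; [left | by right].
by exists (projT1 (cid h)); split => //; exact: (projT2 (cid h)).
Qed.

Lemma avg_in (R : realType) n (d z : 'I_n -> R) (a b : R) :
  (forall i, b <= d i <= a) -> (forall i, 0 <= z i) -> \sum_i z i = 1 ->
  b <= \sum_i d i * z i <= a.
Proof.
move=> hd hz h1; apply/andP; split.
  rewrite -[b]mulr1 -h1 mulr_sumr; apply: ler_sum => i _.
  by apply: ler_wpM2r => //; case/andP: (hd i).
rewrite -[a]mulr1 -h1 mulr_sumr; apply: ler_sum => i _.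
by apply: ler_wpM2r => //; case/andP: (hd i).
Qed.

Unset Implicit Arguments.
Theorem proposition1p11 (R : realType) (n : nat) (Z : 'M[R[i]]_n) (a b p : R)
  (hZ : posdef Z)
  (ha : eigenvalue Z (rC a)) (hb : eigenvalue Z (rC b))
  (hab : forall l : R[i], eigenvalue Z l -> rC b <= l <= rC a)
  (hp1 : 1 <= p) (hp2 : p <= 2) :
  forall (k : nat) (V : 'M[R[i]]_(n, k)), is_isometry V ->
    loewner_ge (mxpowR (compression V Z) p)
      (rC (4 * a * b / (a + b) ^+ 2) *: compression V (mxpowR Z p)).
Proof.
move=> k V hV.
rewrite /loewner_ge.
set M := compression V Z.
have hZh : adj Z = Z := hZ.1.
have hMh : Defs.hermitian M by rewrite /Defs.hermitian /M /compression !adjM adjK hZh mulmxA.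
case: (mxpowR_spec Z p) => [[[U d] [[hU d0 hZU] ->]] | [_ ->]]; last first.
  rewrite /compression mulmx0 mul0mx scaler0 subr0.
  case: (mxpowR_spec M p) => [[[W e] [[hW e0 _] ->]] | [_ ->]].
    by apply: psd_decomp => i; exact: powR_ge0.
  by split; [rewrite /Defs.hermitian adj0 | move=> x; rewrite mulmx0 mul0mx mxE].
rewrite /= in hU d0 hZU *.
have hU' := unitaryC hU.
have hMpos : forall x : 'cV[R[i]]_k, 0 <= (adj x *m M *m x) 0 0.
  move=> x; rewrite /M /compression qcomp hZU qform rC_ge0.
  by apply: sumr_ge0 => i _; rewrite mulr_ge0 ?nsq_ge0.
case: (mxpowR_spec M p) => [[[W e] [[hW e0 hMW] ->]] | [hn _]]; last first.
  by exfalso; apply: hn; exact: spec_exists.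
rewrite /= in hW e0 hMW *.
have hW' := unitaryC hW.
have hd : forall i, b <= d 0 i <= a.
  by move=> i; have := hab _ (decomp_eigen i hU hZU); rewrite !rC_le.
have hVx : forall x : 'cV[R[i]]_k, adj (V *m x) *m (V *m x) = adj x *m x.
  by move=> x; rewrite adjM mulmxA -[adj x *m adj V *m V]mulmxA hV mulmx1.
have he : forall j, b <= e 0 j <= a.
  move=> j; set x := W *m (delta_mx j 0 : 'cV_k).
  have h1 := qform_pick (fun i => e 0 i) j hW'.
  rewrite -/x -hMW /M /compression qcomp hZU qform in h1.
  have h2 := qform_pick (fun i => 1) j hW'.
  rewrite -/x diag1 mulmx1 hW mulmx1 -hVx (qform1 _ hU) in h2.
  rewrite -(rC_inj h1); apply: avg_in => //.
    by move=> i; exact: nsq_ge0.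
  exact: rC_inj h2.
split.
  rewrite /Defs.hermitian adjB adjZ conj_rC hermitian_decomp /compression.
  by rewrite !adjM !adjK !adj_diag !mulmxA.
move=> x.
rewrite mulmxBr mulmxBl -scalemxAr -scalemxAl.
have -> : forall (X Y : 'M[R[i]]_1) (c : R[i]), (X - c *: Y) 0 0 = X 0 0 - c * Y 0 0.
  by move=> X Y c; rewrite !mxE.
rewrite /compression qcomp !qform -rCM -rCB rC_ge0 subr_ge0.
apply: (sum_ineq hd he d0) => //.
- by move=> i; exact: nsq_ge0.
- by move=> i; exact: nsq_ge0.
- by apply: rC_inj; rewrite -(qform1 _ hU) -(qform1 _ hW) hVx.
- have e1 := qform U (fun i => d 0 i) (V *m x).
  have e2 := qform W (fun i => e 0 i) x.
  rewrite -hZU in e1; rewrite -hMW /M /compression qcomp in e2.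
  by apply: rC_inj; rewrite -e1 -e2.
Qed.
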